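(* Let $A>0$, $\alpha>0$ and let $k\ge3$ be an integer such that \[ \frac{4A^{1/2}k^{1/2}\alpha}{\pi^2}+\frac{2A^{1/4}k^{1/4}\alpha^{1/2}}{\pi}\big(k^{1/2}+k^{-1/2}\big)+1\le k. \] Then for every $a$ with $1\le a\le k^{1/2}$, \[ \lambda_k(R^A_a,\alpha)\ge\lambda_k(S_k,\alpha). \]
   Context: For a bounded open set $\Omega\subset\mathbb{R}^2$ with Lipschitz boundary (possibly disconnected) and $\alpha>0$, $\lambda_1(\Omega,\alpha)\le\lambda_2(\Omega,\alpha)\le\cdots$ denote the eigenvalues, counted with multiplicity, of the Robin Laplacian $-\Delta u=\lambda u$, $\partial_\nu u+\alpha u=0$ on $\partial\Omega$ (defined via the form $\int_\Omega\nabla u\cdot\overline{\nabla v}+\alpha\int_{\partial\Omega}u\overline v$ on $H^1(\Omega)$). $R^A_a$ is a rectangle with side lengths $A^{1/2}a$ and $A^{1/2}/a$; $S_k$ is the disjoint union of $k$ equal squares of total area $A$. *)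

(* Defs.v *)
From Stdlib Require Import Reals.
From Coquelicot Require Import Coquelicot.
Open Scope R_scope.

Fixpoint fsum (m : nat) (f : nat -> R) : R :=
  match m with O => 0 | S n => fsum n f + f n end.

Definition dx (u : R -> R -> R) (x y : R) : R := Derive (fun t => u t y) x.
Definition dy (u : R -> R -> R) (x y : R) : R := Derive (fun t => u x t) y.

Definition C1_R2 (u : R -> R -> R) : Prop :=
  forall x y : R,
    ex_derive (fun t => u t y) x /\ ex_derive (fun t => u x t) y /\
    continuous (fun p : R * R => dx u (fst p) (snd p)) (x, y) /\
    continuous (fun p : R * R => dy u (fst p) (snd p)) (x, y).

Definition dint (L1 L2 : R) (g : R -> R -> R) : R :=
  RInt (fun x => RInt (fun y => g x y) 0 L2) 0 L1.

Definition robin_energy (alpha L1 L2 : R) (u : R -> R -> R) : R :=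
  dint L1 L2 (fun x y => (dx u x y) ^ 2 + (dy u x y) ^ 2)
  + alpha * (RInt (fun x => (u x 0) ^ 2 + (u x L2) ^ 2) 0 L1
             + RInt (fun y => (u 0 y) ^ 2 + (u L1 y) ^ 2) 0 L2).

Definition l2norm2 (L1 L2 : R) (u : R -> R -> R) : R :=
  dint L1 L2 (fun x y => (u x y) ^ 2).

(* A domain made of m disjoint copies of the rectangle [0,L1]x[0,L2];
   a function on it is a family U : nat -> (R -> R -> R), U i on copy i (i < m). *)
Definition Qform (alpha : R) (m : nat) (L1 L2 : R) (U : nat -> R -> R -> R) : R :=
  fsum m (fun i => robin_energy alpha L1 L2 (U i)).
Definition Nform (m : nat) (L1 L2 : R) (U : nat -> R -> R -> R) : R :=
  fsum m (fun i => l2norm2 L1 L2 (U i)).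

Definition combo (k : nat) (F : nat -> nat -> R -> R -> R) (c : nat -> R)
  : nat -> R -> R -> R :=
  fun i x y => fsum k (fun j => c j * F j i x y).

Definition nonzero_coeffs (k : nat) (c : nat -> R) : Prop :=
  exists j, (j < k)%nat /\ c j <> 0.

(* F_0..F_{k-1} are C^1 test functions spanning a k-dimensional subspace
   (linearly independent as functions on the domain) *)
Definition admissible (m : nat) (L1 L2 : R) (k : nat) (F : nat -> nat -> R -> R -> R)
  : Prop :=
  (forall j i, (j < k)%nat -> (i < m)%nat -> C1_R2 (F j i)) /\
  (forall c, nonzero_coeffs k c -> 0 < Nform m L1 L2 (combo k F c)).

Definition max_rayleigh (alpha : R) (m : nat) (L1 L2 : R) (k : nat)
  (F : nat -> nat -> R -> R -> R) : Rbar :=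
  Lub_Rbar (fun r => exists c, nonzero_coeffs k c /\
     r = Qform alpha m L1 L2 (combo k F c) / Nform m L1 L2 (combo k F c)).

(* k-th Robin eigenvalue (with multiplicity, k >= 1) by the min-max principle *)
Definition robin_eig (alpha : R) (m : nat) (L1 L2 : R) (k : nat) : Rbar :=
  Glb_Rbar (fun r => exists F, admissible m L1 L2 k F /\
                                max_rayleigh alpha m L1 L2 k F = Finite r).

(* lambda_k(R^A_a, alpha): rectangle with sides sqrt A * a and sqrt A / a *)
Definition eig_rect (A a alpha : R) (k : nat) : Rbar :=
  robin_eig alpha 1 (sqrt A * a) (sqrt A / a) k.

(* lambda_k(S_n, alpha): n equal squares of total area A *)
Definition eig_squares (A alpha : R) (n k : nat) : Rbar :=
  robin_eig alpha n (sqrt (A / INR n)) (sqrt (A / INR n)) k.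

(* Main.v *)
Require Import Defs.
From Stdlib Require Import Reals Lra Lia Psatz List Classical ZArith.
From Coquelicot Require Import Coquelicot.
Open Scope R_scope.

Lemma locally_R (P : R -> Prop) x (d : posreal) :
  (forall t, Rabs (t - x) < d -> P t) -> locally x P.
Proof. intros H. exists d. intros t Ht. apply H. exact Ht. Qed.

Lemma c2d_slice_y g x y : continuity_2d_pt g x y -> continuous (fun t => g x t) y.
Proof.
  intros H. apply filterlim_locally. intros eps.
  destruct (H eps) as [d Hd].
  apply (locally_R _ _ d). intros t Ht. apply Hd.
  rewrite Rminus_diag, Rabs_R0. apply cond_pos. exact Ht.
Qed.

Lemma c2d_slice_x g x y : continuity_2d_pt g x y -> continuous (fun t => g t y) x.
Proof.
  intros H. apply filterlim_locally. intros eps.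
  destruct (H eps) as [d Hd].
  apply (locally_R _ _ d). intros t Ht. apply Hd. exact Ht.
  rewrite Rminus_diag, Rabs_R0. apply cond_pos.
Qed.

Lemma param_cont (g : R -> R -> R) c d :
  (forall x y, continuity_2d_pt g x y) -> c <= d ->
  forall x0, continuous (fun x => RInt (fun y => g x y) c d) x0.
Proof.
  intros Hg Hcd x0. apply filterlim_locally. intros eps.
  assert (He : 0 < eps / (d - c + 1)) by (apply Rdiv_lt_0_compat; [apply cond_pos|lra]).
  destruct (uniform_continuity_2d g (x0 - 1) (x0 + 1) c d
     (fun x y _ _ => Hg x y) (mkposreal _ He)) as [del Hdel].
  assert (Hm : 0 < Rmin del 1) by (apply Rmin_pos; [apply cond_pos|lra]).
  apply (locally_R _ _ (mkposreal _ Hm)). simpl. intros t Ht.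
  assert (Ht1 : Rabs (t - x0) < 1) by (eapply Rlt_le_trans; [exact Ht| apply Rmin_r]).
  assert (Ht2 : Rabs (t - x0) < del) by (eapply Rlt_le_trans; [exact Ht| apply Rmin_l]).
  change (Rabs (RInt (fun y => g t y) c d - RInt (fun y => g x0 y) c d) < eps).
  assert (Ex : forall x, ex_RInt (fun y => g x y) c d).
  { intros x. apply (ex_RInt_continuous (V:=R_CompleteNormedModule)). intros z _. apply c2d_slice_y, Hg. }
  assert (Heq : RInt (fun y => g t y) c d - RInt (fun y => g x0 y) c d
              = RInt (fun y => g t y - g x0 y) c d).
  { symmetry. apply (RInt_minus (V:=R_CompleteNormedModule)); apply Ex. }
  rewrite Heq.
  eapply Rle_lt_trans.
  apply abs_RInt_le_const with (M := eps / (d - c + 1)). exact Hcd.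
  apply (ex_RInt_minus (V:=R_NormedModule)); apply Ex.
  intros y Hy. left. apply Hdel; try lra.
  apply Rabs_lt_between' in Ht1. lra.
  rewrite Rminus_diag, Rabs_R0; apply cond_pos.
  assert (0 < eps) by apply cond_pos.
  apply Rlt_le_trans with ((d - c + 1) * (eps / (d - c + 1))).
  apply Rmult_lt_compat_r; lra.
  right; field; lra.
Qed.

Lemma RInt_plus_R (f g : R -> R) a b : ex_RInt f a b -> ex_RInt g a b ->
  RInt (fun x => f x + g x) a b = RInt f a b + RInt g a b.
Proof. intros. apply (RInt_plus (V:=R_CompleteNormedModule)); auto. Qed.
Lemma RInt_minus_R (f g : R -> R) a b : ex_RInt f a b -> ex_RInt g a b ->
  RInt (fun x => f x - g x) a b = RInt f a b - RInt g a b.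
Proof. intros. apply (RInt_minus (V:=R_CompleteNormedModule)); auto. Qed.
Lemma RInt_scal_R (f : R -> R) k a b : ex_RInt f a b ->
  RInt (fun x => k * f x) a b = k * RInt f a b.
Proof. intros. apply (RInt_scal (V:=R_CompleteNormedModule)); auto. Qed.
Lemma ex_RInt_plus_R (f g : R -> R) a b : ex_RInt f a b -> ex_RInt g a b ->
  ex_RInt (fun x => f x + g x) a b.
Proof. intros. apply (ex_RInt_plus (V:=R_NormedModule)); auto. Qed.
Lemma ex_RInt_minus_R (f g : R -> R) a b : ex_RInt f a b -> ex_RInt g a b ->
  ex_RInt (fun x => f x - g x) a b.
Proof. intros. apply (ex_RInt_minus (V:=R_NormedModule)); auto. Qed.
Lemma ex_RInt_scal_R (f : R -> R) k a b : ex_RInt f a b -> ex_RInt (fun x => k * f x) a b.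
Proof. intros. apply (ex_RInt_scal (V:=R_NormedModule)); auto. Qed.
Lemma ex_RInt_cont (f : R -> R) a b : a <= b -> (forall t, a <= t <= b -> continuous f t) -> ex_RInt f a b.
Proof. intros Hab H. apply (ex_RInt_continuous (V:=R_CompleteNormedModule)).
  intros z Hz. apply H. rewrite Rmin_left, Rmax_right in Hz; lra. Qed.
Lemma RInt_ge0 (f : R -> R) a b : a <= b -> ex_RInt f a b -> (forall t, a <= t <= b -> 0 <= f t) -> 0 <= RInt f a b.
Proof. intros Hab He H. apply RInt_ge_0; auto. intros; apply H; lra. Qed.
Lemma RInt_le_R f g a b : a <= b -> ex_RInt f a b -> ex_RInt g a b ->
  (forall t, a <= t <= b -> f t <= g t) -> RInt f a b <= RInt g a b.
Proof. intros. apply RInt_le; auto. intros; apply H2; lra. Qed.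
Lemma RInt_FTC (h dh : R -> R) a b : a <= b ->
  (forall t, a <= t <= b -> is_derive h t (dh t)) ->
  (forall t, a <= t <= b -> continuous dh t) -> RInt dh a b = h b - h a.
Proof. intros Hab H1 H2. apply is_RInt_unique.
  apply (is_RInt_derive (V:=R_CompleteNormedModule)).
  intros x Hx; apply H1; rewrite Rmin_left, Rmax_right in Hx; lra.
  intros x Hx; apply H2; rewrite Rmin_left, Rmax_right in Hx; lra. Qed.

Lemma cont_sq (f : R -> R) t : continuous f t -> continuous (fun x => f x ^ 2) t.
Proof. intros H. apply (continuous_ext (fun x : R => f x * f x)). intros y; simpl; ring.
  apply (continuous_mult (K:=R_AbsRing)); auto. Qed.
Lemma cont_mul (f g : R -> R) t : continuous f t -> continuous g t -> continuous (fun x => f x * g x) t.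
Proof. intros. apply (continuous_mult (K:=R_AbsRing)); auto. Qed.
Lemma cont_add (f g : R -> R) t : continuous f t -> continuous g t -> continuous (fun x => f x + g x) t.
Proof. intros. apply (continuous_plus (V:=R_NormedModule)); auto. Qed.
Lemma cont_sub (f g : R -> R) t : continuous f t -> continuous g t -> continuous (fun x => f x - g x) t.
Proof. intros. apply (continuous_minus (V:=R_NormedModule)); auto. Qed.
Lemma cont_const (k : R) t : continuous (fun _ : R => k) t.
Proof. apply continuous_const. Qed.
Lemma cont_id t : continuous (fun x : R => x) t.
Proof. apply continuous_id. Qed.

Lemma dirichlet_shift (F f : R -> R) a b c :
  a < b -> 0 < c -> c * (b - a) < PI ->
  (forall t, is_derive F t (f t)) -> (forall t, continuous f t) ->
  F a = 0 -> F b = 0 ->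
  c ^ 2 * RInt (fun t => F t ^ 2) a b <= RInt (fun t => f t ^ 2) a b.
Proof.
  intros Hab Hc HcL HF Hf Fa Fb.
  set (s := (PI / c - (b - a)) / 2).
  assert (Hs : 0 < s).
  { unfold s. apply Rmult_lt_0_compat; [|lra].
    apply Rlt_Rminus. apply (Rmult_lt_reg_l c); auto. field_simplify; lra. }
  assert (Hsin : forall t, a <= t <= b -> 0 < sin (c * (t - a + s))).
  { intros t Ht. apply sin_gt_0.
    apply Rmult_lt_0_compat; lra.
    assert (c * (t - a + s) <= c * (b - a + s)) by (apply Rmult_le_compat_l; lra).
    assert (c * (b - a + s) < PI); [|lra].
    unfold s. replace (c * (b - a + (PI / c - (b - a)) / 2)) with (PI/2 + c * (b-a)/2) by (field; lra).
    lra. }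
  set (r := fun t => c * cos (c * (t - a + s)) / sin (c * (t - a + s))).
  set (h := fun t => F t ^ 2 * r t).
  set (dh := fun t => 2 * F t * f t * r t + F t ^ 2 * (- c^2 - r t ^ 2)).
  assert (HFc : forall t, continuous F t).
  { intros t. apply (ex_derive_continuous (K:=R_AbsRing) (V:=R_NormedModule)). eexists; apply HF. }
  assert (Hrc : forall t, a <= t <= b -> continuous r t).
  { intros t Ht. apply (ex_derive_continuous (K:=R_AbsRing) (V:=R_NormedModule)). unfold r.
    specialize (Hsin t Ht). auto_derive. replace (t + - a + s) with (t - a + s) by ring. lra. }
  assert (Hdh : forall t, a <= t <= b -> is_derive h t (dh t)).
  { intros t Ht. specialize (Hsin t Ht). unfold h, dh, r.
    auto_derive. repeat split; [eexists; apply HF | replace (t + - a + s) with (t - a + s) by ring; lra].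
    replace (Derive (fun x0 => F x0) t) with (f t) by (symmetry; apply is_derive_unique; apply HF).
    replace (t + - a + s) with (t - a + s) by ring.
    field. lra. }
  assert (Hdhc : forall t, a <= t <= b -> continuous dh t).
  { intros t Ht. unfold dh.
    apply cont_add. apply cont_mul; [apply cont_mul; [apply cont_mul|]|]; auto using cont_const.
    apply cont_mul. apply cont_sq; auto. apply cont_sub. apply cont_const. apply cont_sq; auto. }
  assert (Hint : RInt dh a b = 0).
  { rewrite (RInt_FTC h dh a b); try lra; auto. unfold h; rewrite Fa, Fb; simpl; ring. }
  assert (Hpos : 0 <= RInt (fun t => (f t - F t * r t) ^ 2) a b).
  { apply RInt_ge0; [lra| |intros; apply pow2_ge_0].
    apply ex_RInt_cont; [lra|]. intros t Ht. apply cont_sq. apply cont_sub; auto.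
    apply cont_mul; auto. }
  assert (Heq : RInt (fun t => (f t - F t * r t) ^ 2) a b
     = RInt (fun t => f t ^ 2) a b - RInt dh a b - c^2 * RInt (fun t => F t ^ 2) a b).
  { assert (E1 : ex_RInt (fun t => f t ^ 2) a b) by (apply ex_RInt_cont; [lra|]; intros; apply cont_sq; auto).
    assert (E2 : ex_RInt dh a b) by (apply ex_RInt_cont; [lra|]; auto).
    assert (E3 : ex_RInt (fun t => F t ^ 2) a b) by (apply ex_RInt_cont; [lra|]; intros; apply cont_sq; auto).
    rewrite <- RInt_scal_R by auto. rewrite <- RInt_minus_R by auto.
    rewrite <- RInt_minus_R; [| apply ex_RInt_minus_R; auto | apply ex_RInt_scal_R; auto].
    apply RInt_ext. intros t _. unfold dh. match goal with |- ?x = ?y => change (@eq R x y) end; ring. }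
  lra.
Qed.

Ltac Req := match goal with |- ?x = ?y => change (@eq R x y) end.

Lemma limit_c X Y L : 0 < L -> 0 <= X ->
  (forall c, 0 < c -> c * L < PI -> c ^ 2 * X <= Y) -> (PI / L) ^ 2 * X <= Y.
Proof.
  intros HL HX H.
  destruct (Rle_lt_dec ((PI / L) ^ 2 * X) Y) as [h|h]; auto.
  exfalso.
  assert (HP : 0 < PI / L) by (apply Rdiv_lt_0_compat; [apply PI_RGT_0|auto]).
  assert (HX0 : 0 < X).
  { destruct HX as [HX|HX]; auto. subst. assert (0 <= Y).
    { specialize (H (PI / (2 * L))). 
      assert (0 < PI / (2*L)) by (apply Rdiv_lt_0_compat; [apply PI_RGT_0|lra]).
      assert (PI / (2 * L) * L < PI) by (field_simplify; [|lra]; assert (0<PI) by apply PI_RGT_0; lra).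
      specialize (H H0 H1). lra. }
    lra. }
  set (z := ((PI / L) ^ 2 + Rmax (Y / X) 0) / 2).
  assert (Hz0 : 0 < z).
  { unfold z. assert (0 <= Rmax (Y/X) 0) by apply Rmax_r. assert (0 < (PI/L)^2) by (apply pow_lt; auto). lra. }
  assert (HYX : Y / X < (PI / L) ^ 2).
  { apply (Rmult_lt_reg_r X); auto. replace (Y / X * X) with Y by (field; lra). lra. }
  assert (Hz1 : z < (PI / L) ^ 2).
  { unfold z. unfold Rmax. destruct (Rle_dec (Y/X) 0); nra. }
  assert (Hz2 : Y / X < z).
  { unfold z. assert (Y/X <= Rmax (Y/X) 0) by apply Rmax_l. lra. }
  set (c := sqrt z).
  assert (Hc0 : 0 < c) by (apply sqrt_lt_R0; auto).
  assert (Hc2 : c ^ 2 = z) by (unfold c; simpl; rewrite Rmult_1_r; apply sqrt_sqrt; lra).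
  assert (HcL : c * L < PI).
  { assert (c < PI / L).
    { apply Rnot_le_lt; intro Hle. assert ((PI/L)^2 <= c^2) by (apply pow_incr; lra). lra. }
    apply (Rmult_lt_compat_r L) in H0; auto. field_simplify in H0; lra. }
  specialize (H c Hc0 HcL). rewrite Hc2 in H.
  assert (z * X > Y).
  { apply (Rmult_lt_compat_r X) in Hz2; auto. replace (Y / X * X) with Y in Hz2 by (field; lra). lra. }
  lra.
Qed.

Lemma wirtinger (f f' : R -> R) a b : a < b ->
  (forall t, is_derive f t (f' t)) -> (forall t, continuous f' t) ->
  RInt f a b = 0 ->
  (PI / (b - a)) ^ 2 * RInt (fun t => f t ^ 2) a b <= RInt (fun t => f' t ^ 2) a b.
Proof.
  intros Hab Hd Hc Hm.
  assert (Hfc : forall t, continuous f t).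
  { intros t. apply (ex_derive_continuous (K:=R_AbsRing) (V:=R_NormedModule)). eexists; apply Hd. }
  assert (Hex : forall u v, ex_RInt f u v).
  { intros u v. apply (ex_RInt_continuous (V:=R_CompleteNormedModule)). intros; apply Hfc. }
  set (F := fun t => RInt f a t).
  assert (HF : forall t, is_derive F t (f t)).
  { intros t. apply (is_derive_RInt (V:=R_NormedModule) f F a t); auto.
    apply filter_forall. intros u. unfold F. apply (RInt_correct (V:=R_CompleteNormedModule)). apply Hex. }
  assert (HFc : forall t, continuous F t).
  { intros t. apply (ex_derive_continuous (K:=R_AbsRing) (V:=R_NormedModule)). eexists; apply HF. }
  assert (Fa : F a = 0) by (unfold F; apply (RInt_point (V:=R_CompleteNormedModule))).
  assert (Fb : F b = 0) by (unfold F; auto).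
  assert (E : forall g : R -> R, (forall t, continuous g t) -> ex_RInt g a b).
  { intros g Hg. apply ex_RInt_cont; [lra|]. intros; auto. }
  assert (IBP : RInt (fun t => f t ^ 2) a b + RInt (fun t => F t * f' t) a b = 0).
  { rewrite <- RInt_plus_R.
    2: apply E; intros; apply cont_sq; auto.
    2: apply E; intros; apply cont_mul; auto.
    rewrite (RInt_FTC (fun t => F t * f t)); [rewrite Fa, Fb; ring | lra | |].
    intros t _. 
    replace (f t ^ 2 + F t * f' t) with (f t * f t + F t * f' t) by ring.
    apply (is_derive_mult (K:=R_AbsRing) F f); auto. intros; simpl; apply Rmult_comm.
    intros t _. apply cont_add; [apply cont_sq|apply cont_mul]; auto. }
  apply limit_c; [lra| |].
  { apply RInt_ge0; [lra|apply E; intros; apply cont_sq; auto|intros; apply pow2_ge_0]. }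
  intros c Hc0 HcL.
  assert (D := dirichlet_shift F f a b c Hab Hc0 HcL HF Hfc Fa Fb).
  assert (AM : RInt (fun t => - (F t * f' t)) a b <=
               RInt (fun t => (c^2 * F t ^ 2 + / c^2 * f' t ^ 2) / 2) a b).
  { apply RInt_le_R; [lra| | |].
    apply E; intros; apply (continuous_opp (V:=R_NormedModule) (fun t => F t * f' t)); apply cont_mul; auto.
    apply E; intros. apply (continuous_ext (fun t => / 2 * (c^2 * F t ^ 2 + / c^2 * f' t ^ 2))).
    intros y; Req; unfold Rdiv; ring. apply cont_mul. apply cont_const. apply cont_add; apply cont_mul; try apply cont_const; apply cont_sq; auto.
    intros t _. 
    assert (0 <= (c * F t + / c * f' t) ^ 2) by apply pow2_ge_0.
    assert (c * / c = 1) by (field; lra).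
    replace ((c * F t + / c * f' t) ^ 2) with (c^2 * F t ^ 2 + 2 * (c * / c) * F t * f' t + / c ^ 2 * f' t ^ 2) in H by (field; lra).
    rewrite H0 in H. lra. }
  assert (E1 : ex_RInt (fun t => F t ^ 2) a b) by (apply E; intros; apply cont_sq; auto).
  assert (E2 : ex_RInt (fun t => f' t ^ 2) a b) by (apply E; intros; apply cont_sq; auto).
  assert (E3 : ex_RInt (fun t => F t * f' t) a b) by (apply E; intros; apply cont_mul; auto).
  assert (L1 : RInt (fun t => - (F t * f' t)) a b = - RInt (fun t => F t * f' t) a b).
  { replace (- RInt (fun t => F t * f' t) a b) with (-1 * RInt (fun t => F t * f' t) a b) by ring.
    rewrite <- (RInt_scal_R _ (-1)) by auto. apply RInt_ext; intros; Req; ring. }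
  assert (L2 : RInt (fun t => (c^2 * F t ^ 2 + / c^2 * f' t ^ 2) / 2) a b
             = c^2 / 2 * RInt (fun t => F t ^ 2) a b + / c^2 / 2 * RInt (fun t => f' t ^ 2) a b).
  { rewrite <- (RInt_scal_R _ (c^2/2)) by auto. rewrite <- (RInt_scal_R _ (/c^2/2)) by auto.
    rewrite <- RInt_plus_R by (apply ex_RInt_scal_R; auto).
    apply RInt_ext; intros; Req; field; lra. }
  rewrite L1, L2 in AM.
  set (X := RInt (fun t => f t ^ 2) a b) in *.
  set (Y := RInt (fun t => f' t ^ 2) a b) in *.
  set (Z := RInt (fun t => F t ^ 2) a b) in *.
  assert (X <= X / 2 + / c ^ 2 / 2 * Y) by lra.
  assert (c^2 * X <= c^2 * (/ c^2 * Y)).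
  { apply Rmult_le_compat_l; [nra|]. lra. }
  assert (Hh : forall y : R, c^2 * (/c^2 * y) = y) by (intros; field; lra).
  rewrite Hh in H0. exact H0.
Qed.

Lemma is_derive_sub_const (h : R -> R) (dh k t : R) :
  is_derive h t dh -> is_derive (fun s => h s - k) t dh.
Proof.
  intros H. auto_derive. eexists; exact H.
  replace (Derive (fun x => h x) t) with dh by (symmetry; apply is_derive_unique; exact H). ring.
Qed.

Lemma joint_cont (u uy : R -> R -> R) x y :
  (forall a b, is_derive (fun t => u a t) b (uy a b)) ->
  (forall a b, continuity_2d_pt uy a b) ->
  continuous (fun t => u t y) x ->
  continuity_2d_pt u x y.
Proof.
  intros Hd Hc Hx eps.
  destruct (Hc x y (mkposreal 1 Rlt_0_1)) as [d1 Hd1].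
  set (D := Rabs (uy x y) + 1).
  assert (HD : 0 < D) by (unfold D; assert (0 <= Rabs (uy x y)) by apply Rabs_pos; lra).
  assert (He2 : 0 < eps / 2) by (assert (0 < eps) by apply cond_pos; lra).
  unfold continuous in Hx. destruct (proj1 (filterlim_locally _ _) Hx (mkposreal _ He2)) as [d2 Hd2].
  assert (He3 : 0 < eps / (2 * (D + 1))) by (apply Rdiv_lt_0_compat; [apply cond_pos|lra]).
  assert (Hm : 0 < Rmin d1 (Rmin d2 (eps / (2 * (D + 1))))).
  { apply Rmin_pos; [apply cond_pos|apply Rmin_pos; [apply cond_pos|exact He3]]. }
  exists (mkposreal _ Hm). simpl. intros x' y' Hx' Hy'.
  assert (A1 : Rabs (x' - x) < d1) by (eapply Rlt_le_trans; [exact Hx'|apply Rmin_l]).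
  assert (A2 : Rabs (x' - x) < d2) by (eapply Rlt_le_trans; [exact Hx'|eapply Rle_trans; [apply Rmin_r|apply Rmin_l]]).
  assert (B1 : Rabs (y' - y) < d1) by (eapply Rlt_le_trans; [exact Hy'|apply Rmin_l]).
  assert (B3 : Rabs (y' - y) < eps / (2 * (D + 1))) by (eapply Rlt_le_trans; [exact Hy'|eapply Rle_trans; [apply Rmin_r|apply Rmin_r]]).
  assert (T1 : Rabs (u x' y' - u x' y) <= D * Rabs (y' - y)).
  { apply (bounded_variation (fun t => u x' t) (uy x')). intros t Ht. split; auto.
    assert (Rabs (uy x' t - uy x y) < 1).
    { apply (Hd1 x' t); auto. eapply Rle_lt_trans; [exact Ht|exact B1]. }
    unfold D. 
    replace (uy x' t) with ((uy x' t - uy x y) + uy x y) by ring.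
    eapply Rle_trans; [apply Rabs_triang|]. lra. }
  assert (T2 : Rabs (u x' y - u x y) < eps / 2).
  { apply (Hd2 x'). exact A2. }
  replace (u x' y' - u x y) with ((u x' y' - u x' y) + (u x' y - u x y)) by ring.
  eapply Rle_lt_trans; [apply Rabs_triang|].
  assert (D * Rabs (y' - y) <= D * (eps / (2 * (D + 1)))).
  { apply Rmult_le_compat_l; lra. }
  assert (D * (eps / (2 * (D + 1))) < eps / 2).
  { assert (0 < eps) by apply cond_pos.
    replace (D * (eps / (2 * (D + 1)))) with ((D / (D+1)) * (eps / 2)) by (field; lra).
    assert (D / (D+1) < 1) by (apply (Rmult_lt_reg_r (D+1)); [lra|]; field_simplify; lra).
    nra. }
  lra.
Qed.

Definition C1f (u ux uy : R -> R -> R) :=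
  (forall x y, is_derive (fun t => u t y) x (ux x y)) /\
  (forall x y, is_derive (fun t => u x t) y (uy x y)) /\
  (forall x y, continuity_2d_pt ux x y) /\
  (forall x y, continuity_2d_pt uy x y).

Definition I2 (x0 x1 y0 y1 : R) (g : R -> R -> R) :=
  RInt (fun x => RInt (fun y => g x y) y0 y1) x0 x1.

Lemma sq_expand (g : R -> R) k a b : a <= b ->
  ex_RInt g a b -> ex_RInt (fun y => g y ^ 2) a b ->
  RInt (fun y => (g y - k) ^ 2) a b
  = RInt (fun y => g y ^ 2) a b - 2 * k * RInt g a b + (b - a) * k ^ 2.
Proof.
  intros Hab E1 E2.
  assert (E3 : ex_RInt (fun y => 2 * k * g y) a b) by (apply ex_RInt_scal_R; exact E1).
  assert (E4 : ex_RInt (fun y => g y ^ 2 - 2 * k * g y) a b) by (apply ex_RInt_minus_R; [exact E2|exact E3]).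
  assert (E5 : ex_RInt (fun _ => k ^ 2) a b) by apply (ex_RInt_const (V:=R_NormedModule)).
  rewrite (RInt_ext _ (fun y => (g y ^ 2 - (2 * k) * g y) + k ^ 2)) by (intros; Req; ring).
  rewrite (RInt_plus_R (fun y => g y ^ 2 - 2 * k * g y) (fun _ => k ^ 2) a b E4 E5).
  rewrite (RInt_minus_R (fun y => g y ^ 2) (fun y => 2 * k * g y) a b E2 E3).
  rewrite (RInt_scal_R g (2 * k) a b E1).
  rewrite (RInt_const (V:=R_CompleteNormedModule)). unfold scal; simpl; unfold mult; simpl. ring.
Qed.

Definition cont2 (g : R -> R -> R) := forall x y, continuity_2d_pt g x y.

Lemma cont2_sq g : cont2 g -> cont2 (fun x y => g x y ^ 2).
Proof. intros H x y. apply (continuity_2d_pt_ext (fun a b => g a b * g a b)).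
  intros; ring. apply continuity_2d_pt_mult; apply H. Qed.
Lemma cont2_plus g h : cont2 g -> cont2 h -> cont2 (fun x y => g x y + h x y).
Proof. intros H1 H2 x y. apply continuity_2d_pt_plus; auto. Qed.
Lemma slice_ex (g : R -> R -> R) x y0 y1 : y0 <= y1 -> cont2 g -> ex_RInt (fun y => g x y) y0 y1.
Proof. intros H Hg. apply ex_RInt_cont; auto. intros; apply c2d_slice_y, Hg. Qed.
Lemma inner_ex (g : R -> R -> R) a b y0 y1 : a <= b -> y0 <= y1 -> cont2 g ->
  ex_RInt (fun x => RInt (fun y => g x y) y0 y1) a b.
Proof. intros H1 H2 Hg. apply ex_RInt_cont; auto. intros; apply param_cont; auto. Qed.

Lemma cell_ineq u ux uy x0 x1 y0 y1 : C1f u ux uy -> x0 < x1 -> y0 < y1 ->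
  I2 x0 x1 y0 y1 u = 0 ->
  Rmin ((PI / (x1 - x0)) ^ 2) ((PI / (y1 - y0)) ^ 2) * I2 x0 x1 y0 y1 (fun x y => u x y ^ 2)
  <= I2 x0 x1 y0 y1 (fun x y => ux x y ^ 2 + uy x y ^ 2).
Proof.
  intros [Hux [Huy [Cux Cuy]]] Hx Hy Hmean.
  assert (Cu : cont2 u).
  { intros x y. apply (joint_cont u uy x y Huy Cuy).
    apply (ex_derive_continuous (K:=R_AbsRing) (V:=R_NormedModule)). eexists; apply Hux. }
  set (q := y1 - y0). set (p := x1 - x0).
  assert (Hq : 0 < q) by (unfold q; lra).
  assert (Hp : 0 < p) by (unfold p; lra).
  set (Iu := fun x => RInt (fun y => u x y) y0 y1).
  set (Iux := fun x => RInt (fun y => ux x y) y0 y1).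
  set (m := fun x => / q * Iu x).
  set (m' := fun x => / q * Iux x).
  assert (HIu : forall x, is_derive Iu x (Iux x)).
  { intros x. unfold Iu, Iux.
    assert (H := is_derive_RInt_param u y0 y1 x).
    rewrite (RInt_ext (fun t => Derive (fun u' => u u' t) x) (fun y => ux x y)) in H.
    apply H.
    apply filter_forall. intros x' t _. eexists; apply Hux.
    intros t _. apply (continuity_2d_pt_ext ux). intros a b. symmetry. apply is_derive_unique, Hux. apply Cux.
    apply filter_forall. intros x'. apply slice_ex; [lra|exact Cu].
    intros t _. apply is_derive_unique, Hux. }
  assert (Hm : forall x, is_derive m x (m' x)).
  { intros x. unfold m, m'. apply is_derive_scal. apply HIu. }
  assert (Hm'c : forall x, continuous m' x).
  { intros x. unfold m'. apply cont_mul. apply cont_const. unfold Iux. apply param_cont; [exact Cux|lra]. }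
  assert (Hmc : forall x, continuous m x).
  { intros x. apply (ex_derive_continuous (K:=R_AbsRing) (V:=R_NormedModule)). eexists; apply Hm. }
  assert (Hmean' : RInt m x0 x1 = 0).
  { unfold m. rewrite (RInt_scal_R Iu (/q) x0 x1). unfold Iu. unfold I2 in Hmean. rewrite Hmean. Req; ring.
    apply (inner_ex u); [lra|lra|exact Cu]. }
  assert (W1 := wirtinger m m' x0 x1 Hx Hm Hm'c Hmean').
  fold p in W1.
  assert (EU : forall x, ex_RInt (fun y => u x y) y0 y1) by (intros; apply slice_ex; [lra|exact Cu]).
  assert (EU2 : forall x, ex_RInt (fun y => u x y ^ 2) y0 y1) by (intros; apply (slice_ex (fun a b => u a b ^ 2)); [lra|apply cont2_sq; exact Cu]).
  assert (EUX : forall x, ex_RInt (fun y => ux x y) y0 y1) by (intros; apply slice_ex; [lra|exact Cux]).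
  assert (EUX2 : forall x, ex_RInt (fun y => ux x y ^ 2) y0 y1) by (intros; apply (slice_ex (fun a b => ux a b ^ 2)); [lra|apply cont2_sq; exact Cux]).
  assert (EUY2 : forall x, ex_RInt (fun y => uy x y ^ 2) y0 y1) by (intros; apply (slice_ex (fun a b => uy a b ^ 2)); [lra|apply cont2_sq; exact Cuy]).
  set (U := fun x => RInt (fun y => u x y ^ 2) y0 y1).
  set (UX := fun x => RInt (fun y => ux x y ^ 2) y0 y1).
  set (UY := fun x => RInt (fun y => uy x y ^ 2) y0 y1).
  assert (Sq1 : forall x, RInt (fun y => (u x y - m x) ^ 2) y0 y1 = U x - q * m x ^ 2).
  { intros x. rewrite (sq_expand (fun y => u x y) (m x) y0 y1); [|lra|apply EU|apply EU2].
    fold q. unfold U. fold (Iu x). unfold m. Req. field. lra. }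
  assert (P0 : forall x, 0 <= U x - q * m x ^ 2).
  { intros x. rewrite <- Sq1. apply RInt_ge0; [lra| |intros; apply pow2_ge_0].
    apply ex_RInt_cont; [lra|]. intros; apply cont_sq. apply cont_sub. apply c2d_slice_y, Cu. apply cont_const. }
  assert (P1 : forall x, (PI / q) ^ 2 * (U x - q * m x ^ 2) <= UY x).
  { intros x. rewrite <- Sq1. unfold q, UY. apply wirtinger; [lra| | |].
    intros t. apply is_derive_sub_const. apply Huy.
    intros t. apply c2d_slice_y, Cuy.
    rewrite (RInt_minus_R (fun y => u x y) (fun _ => m x) y0 y1 (EU x) (ex_RInt_const (V:=R_NormedModule) _ _ _)).
    rewrite (RInt_const (V:=R_CompleteNormedModule)). unfold scal; simpl; unfold mult; simpl.
    fold (Iu x). unfold m. fold q. field. lra. }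
  assert (P2 : forall x, q * m' x ^ 2 <= UX x).
  { intros x.
    assert (H := sq_expand (fun y => ux x y) (m' x) y0 y1 (Rlt_le _ _ Hy) (EUX x) (EUX2 x)).
    fold q in H. fold (UX x) in H. fold (Iux x) in H.
    assert (0 <= RInt (fun y => (ux x y - m' x) ^ 2) y0 y1).
    { apply RInt_ge0; [lra| |intros; apply pow2_ge_0].
      apply ex_RInt_cont; [lra|]. intros; apply cont_sq. apply cont_sub. apply c2d_slice_y, Cux. apply cont_const. }
    rewrite H in H0. unfold m' in *. 
    assert (Hz : forall z : R, z = q * (/ q * z)) by (intros; field; lra). specialize (Hz (Iux x)). set (w := / q * Iux x) in *. rewrite Hz in H0. unfold UX. nra. }
  assert (CU : forall x, continuous U x) by (intros; apply (param_cont (fun a b => u a b ^ 2)); [apply cont2_sq; exact Cu|lra]).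
  assert (CUX : forall x, continuous UX x) by (intros; apply (param_cont (fun a b => ux a b ^ 2)); [apply cont2_sq; exact Cux|lra]).
  assert (CUY : forall x, continuous UY x) by (intros; apply (param_cont (fun a b => uy a b ^ 2)); [apply cont2_sq; exact Cuy|lra]).
  assert (EXf : forall f : R -> R, (forall x, continuous f x) -> ex_RInt f x0 x1).
  { intros f Hf. apply ex_RInt_cont; [lra|]. intros; apply Hf. }
  assert (EM2 : ex_RInt (fun x => m x ^ 2) x0 x1) by (apply EXf; intros; apply cont_sq; auto).
  assert (EM'2 : ex_RInt (fun x => m' x ^ 2) x0 x1) by (apply EXf; intros; apply cont_sq; auto).
  assert (EqM2 : ex_RInt (fun x => q * m x ^ 2) x0 x1) by (apply ex_RInt_scal_R; exact EM2).
  assert (EUm : ex_RInt (fun x => U x - q * m x ^ 2) x0 x1) by (apply ex_RInt_minus_R; [apply EXf; exact CU|exact EqM2]).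
  assert (LinU : RInt (fun x => U x - q * m x ^ 2) x0 x1 = RInt U x0 x1 - q * RInt (fun x => m x ^ 2) x0 x1).
  { rewrite (RInt_minus_R U (fun x => q * m x ^ 2) x0 x1 (EXf U CU) EqM2).
    rewrite (RInt_scal_R (fun x => m x ^ 2) q x0 x1 EM2). reflexivity. }
  assert (I0 : 0 <= RInt U x0 x1 - q * RInt (fun x => m x ^ 2) x0 x1).
  { rewrite <- LinU. apply RInt_ge0; [lra|exact EUm|intros; apply P0]. }
  assert (M0 : 0 <= RInt (fun x => m x ^ 2) x0 x1).
  { apply RInt_ge0; [lra|exact EM2|intros; apply pow2_ge_0]. }
  assert (J1 : (PI / q) ^ 2 * (RInt U x0 x1 - q * RInt (fun x => m x ^ 2) x0 x1) <= RInt UY x0 x1).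
  { rewrite <- LinU. rewrite <- (RInt_scal_R _ ((PI/q)^2) x0 x1 EUm).
    apply RInt_le_R; [lra|apply ex_RInt_scal_R; exact EUm|apply EXf; exact CUY|intros; apply P1]. }
  assert (J2 : q * RInt (fun x => m' x ^ 2) x0 x1 <= RInt UX x0 x1).
  { rewrite <- (RInt_scal_R _ q x0 x1 EM'2).
    apply RInt_le_R; [lra|apply ex_RInt_scal_R; exact EM'2|apply EXf; exact CUX|intros; apply P2]. }
  assert (Split : I2 x0 x1 y0 y1 (fun x y => ux x y ^ 2 + uy x y ^ 2) = RInt UX x0 x1 + RInt UY x0 x1).
  { unfold I2. rewrite <- (RInt_plus_R UX UY x0 x1 (EXf UX CUX) (EXf UY CUY)).
    apply RInt_ext. intros x _. unfold UX, UY.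
    apply (RInt_plus_R (fun y => ux x y ^ 2) (fun y => uy x y ^ 2) y0 y1 (EUX2 x) (EUY2 x)). }
  rewrite Split. change (I2 x0 x1 y0 y1 (fun x y => u x y ^ 2)) with (RInt U x0 x1).
  set (A := (PI / p) ^ 2) in *. set (B := (PI / q) ^ 2) in *.
  set (K := Rmin A B).
  assert (KA : K <= A) by apply Rmin_l.
  assert (KB : K <= B) by apply Rmin_r.
  assert (K0 : 0 <= K).
  { unfold K, Rmin. destruct (Rle_dec A B); [unfold A|unfold B]; apply pow2_ge_0. }
  set (M := RInt (fun x => m x ^ 2) x0 x1) in *.
  set (M' := RInt (fun x => m' x ^ 2) x0 x1) in *.
  set (V := RInt U x0 x1 - q * M) in *.
  assert (qM0 : 0 <= q * M) by nra.
  assert (E1 : K * (q * M) <= A * (q * M)) by (apply Rmult_le_compat_r; auto).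
  assert (E2 : K * V <= B * V) by (apply Rmult_le_compat_r; auto).
  assert (E3 : q * (A * M) <= q * M') by (apply Rmult_le_compat_l; lra).
  assert (@eq R (RInt U x0 x1) (q * M + V)) by (unfold V; lra).
  rewrite H. nra.
Qed.

Lemma fsum_S m (f : nat -> R) : fsum (S m) f = fsum m f + f m.
Proof. reflexivity. Qed.

Lemma fsum_le m (f g : nat -> R) : (forall i, (i < m)%nat -> f i <= g i) -> fsum m f <= fsum m g.
Proof. induction m; simpl; intros H. lra.
  assert (fsum m f <= fsum m g) by (apply IHm; intros; apply H; lia).
  assert (f m <= g m) by (apply H; lia). lra. Qed.
Lemma fsum_scal m (f : nat -> R) k : k * fsum m f = fsum m (fun i => k * f i).
Proof. induction m; simpl. ring. rewrite <- IHm. ring. Qed.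
Lemma fsum_ext m (f g : nat -> R) : (forall i, (i < m)%nat -> f i = g i) -> fsum m f = fsum m g.
Proof. induction m; simpl; intros H. auto. rewrite IHm by (intros; apply H; lia). rewrite H by lia. auto. Qed.

Lemma I2_split_x g a b c y0 y1 : a <= b -> b <= c -> y0 <= y1 -> cont2 g ->
  I2 a c y0 y1 g = I2 a b y0 y1 g + I2 b c y0 y1 g.
Proof. intros. unfold I2. symmetry.
  apply (RInt_Chasles (V:=R_CompleteNormedModule)); apply inner_ex; auto. Qed.

Lemma I2_split_y g x0 x1 a b c : x0 <= x1 -> a <= b -> b <= c -> cont2 g ->
  I2 x0 x1 a c g = I2 x0 x1 a b g + I2 x0 x1 b c g.
Proof. intros. unfold I2.
  rewrite <- (RInt_plus_R (fun x => RInt (fun y => g x y) a b) (fun x => RInt (fun y => g x y) b c)); try (apply inner_ex; auto).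
  apply RInt_ext. intros x _. symmetry.
  apply (RInt_Chasles (V:=R_CompleteNormedModule)); apply slice_ex; auto. Qed.

Lemma I2_decomp_x g p m y0 y1 : 0 <= p -> y0 <= y1 -> cont2 g ->
  I2 0 (INR m * p) y0 y1 g = fsum m (fun i => I2 (INR i * p) (INR (S i) * p) y0 y1 g).
Proof. intros Hp Hy Hg. induction m.
  simpl. unfold I2. rewrite Rmult_0_l. apply (RInt_point (V:=R_CompleteNormedModule)).
  rewrite fsum_S. rewrite <- IHm.
  apply I2_split_x; auto. apply Rmult_le_pos; [apply pos_INR|auto].
  apply Rmult_le_compat_r; auto. apply le_INR; lia. Qed.

Lemma I2_decomp_y g x0 x1 q n : 0 <= q -> x0 <= x1 -> cont2 g ->
  I2 x0 x1 0 (INR n * q) g = fsum n (fun j => I2 x0 x1 (INR j * q) (INR (S j) * q) g).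
Proof. intros Hq Hx Hg. induction n.
  simpl. unfold I2. rewrite Rmult_0_l.
  rewrite (RInt_ext _ (fun _ => 0)). rewrite (RInt_const (V:=R_CompleteNormedModule)).
  unfold scal; simpl; unfold mult; simpl. ring.
  intros; apply (RInt_point (V:=R_CompleteNormedModule)).
  rewrite fsum_S. rewrite <- IHn.
  apply I2_split_y; auto. apply Rmult_le_pos; [apply pos_INR|auto].
  apply Rmult_le_compat_r; auto. apply le_INR; lia. Qed.

Lemma grid_ineq u ux uy m n L1 L2 : C1f u ux uy -> (0 < m)%nat -> (0 < n)%nat -> 0 < L1 -> 0 < L2 ->
  (forall i j, (i < m)%nat -> (j < n)%nat ->
     I2 (INR i * (L1 / INR m)) (INR (S i) * (L1 / INR m))
        (INR j * (L2 / INR n)) (INR (S j) * (L2 / INR n)) u = 0) ->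
  Rmin ((PI / (L1 / INR m)) ^ 2) ((PI / (L2 / INR n)) ^ 2) * I2 0 L1 0 L2 (fun x y => u x y ^ 2)
  <= I2 0 L1 0 L2 (fun x y => ux x y ^ 2 + uy x y ^ 2).
Proof.
  intros HC Hm Hn H1 H2 Hcell.
  assert (Hm' : 0 < INR m) by (apply lt_0_INR; lia).
  assert (Hn' : 0 < INR n) by (apply lt_0_INR; lia).
  set (p := L1 / INR m). set (q := L2 / INR n).
  assert (Hp : 0 < p) by (unfold p; apply Rdiv_lt_0_compat; auto).
  assert (Hq : 0 < q) by (unfold q; apply Rdiv_lt_0_compat; auto).
  assert (EL1 : L1 = INR m * p) by (unfold p; field; lra).
  assert (EL2 : L2 = INR n * q) by (unfold q; field; lra).
  destruct HC as [Hux [Huy [Cux Cuy]]].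
  assert (Cu : cont2 u).
  { intros x y. apply (joint_cont u uy x y Huy Cuy).
    apply (ex_derive_continuous (K:=R_AbsRing) (V:=R_NormedModule)). eexists; apply Hux. }
  assert (C1 : cont2 (fun x y => u x y ^ 2)) by (apply cont2_sq; auto).
  assert (C2 : cont2 (fun x y => ux x y ^ 2 + uy x y ^ 2)) by (apply cont2_plus; apply cont2_sq; auto).
  assert (Dec : forall g, cont2 g -> I2 0 L1 0 L2 g =
     fsum m (fun i => fsum n (fun j => I2 (INR i * p) (INR (S i) * p) (INR j * q) (INR (S j) * q) g))).
  { intros g Hg. rewrite EL1 at 1. rewrite (I2_decomp_x g p m 0 L2); [|lra|lra|auto].
    apply fsum_ext. intros i Hi. rewrite EL2 at 1. apply I2_decomp_y; auto. lra.
    apply Rmult_le_compat_r; [lra|]. apply le_INR; lia. }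
  rewrite (Dec _ C1), (Dec _ C2).
  rewrite fsum_scal. apply fsum_le. intros i Hi.
  rewrite fsum_scal. apply fsum_le. intros j Hj.
  assert (Wp : INR (S i) * p - INR i * p = p) by (rewrite S_INR; ring).
  assert (Wq : INR (S j) * q - INR j * q = q) by (rewrite S_INR; ring).
  rewrite <- Wp at 1. rewrite <- Wq at 1.
  apply cell_ineq.
  exact (conj Hux (conj Huy (conj Cux Cuy))).
  rewrite S_INR; nra. rewrite S_INR; nra.
  apply Hcell; auto.
Qed.

Lemma fsum_ext' m (f g : nat -> R) : (forall i, (i < m)%nat -> f i = g i) -> fsum m f = fsum m g.
Proof. induction m; simpl; intros H. auto. rewrite IHm by (intros; apply H; lia). rewrite H by lia. auto. Qed.

Lemma fsum_lin n (a b c : nat -> R) k :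
  fsum n (fun j => (a j - k * b j) * c j) = fsum n (fun j => a j * c j) - k * fsum n (fun j => b j * c j).
Proof. induction n; simpl. ring. rewrite IHn. ring. Qed.

Lemma fsum_zero n (f : nat -> R) : (forall j, (j < n)%nat -> f j = 0) -> fsum n f = 0.
Proof. induction n; simpl; intros H. auto. rewrite IHn by (intros; apply H; lia). rewrite H by lia. ring. Qed.

Lemma lin_solve : forall nv (eqs : list (nat -> R)), (length eqs < nv)%nat ->
  exists c : nat -> R, (exists j, (j < nv)%nat /\ c j <> 0) /\
    List.Forall (fun r => fsum nv (fun j => r j * c j) = 0) eqs.
Proof.
  induction nv as [|n IH]; intros eqs Hlen. lia.
  destruct (Classical_Prop.classic (List.Forall (fun r : nat -> R => r n = 0) eqs)) as [Hall|Hnot].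
  - exists (fun j => if Nat.eqb j n then 1 else 0). split.
    + exists n. split. lia. rewrite Nat.eqb_refl. lra.
    + rewrite List.Forall_forall in *. intros r Hr. simpl.
      rewrite fsum_zero. rewrite Nat.eqb_refl, Hall by auto. ring.
      intros j Hj. destruct (Nat.eqb_spec j n). lia. ring.
  - assert (Hex : exists r0, In r0 eqs /\ r0 n <> 0).
    { apply Classical_Prop.NNPP. intros Hn. apply Hnot. rewrite List.Forall_forall. intros r Hr.
      apply Classical_Prop.NNPP. intros Hr'. apply Hn. exists r. auto. }
    destruct Hex as [r0 [Hin Hr0]].
    destruct (in_split _ _ Hin) as [l1 [l2 Heq]]. subst eqs.
    set (eqs' := map (fun r : nat -> R => fun j => r j - r n / r0 n * r0 j) (l1 ++ l2)).
    assert (Hl' : (length eqs' < n)%nat).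
    { unfold eqs'. rewrite length_map, length_app. rewrite length_app in Hlen. simpl in Hlen. lia. }
    destruct (IH eqs' Hl') as [c' [[j0 [Hj0 Hc0]] Hsol]].
    set (t := - fsum n (fun j => r0 j * c' j) / r0 n).
    exists (fun j => if Nat.eqb j n then t else c' j). split.
    + exists j0. split. lia. destruct (Nat.eqb_spec j0 n). lia. auto.
    + assert (Hred : forall r : nat -> R, fsum (S n) (fun j => r j * (if Nat.eqb j n then t else c' j))
                    = fsum n (fun j => r j * c' j) + r n * t).
      { intros r. simpl. rewrite Nat.eqb_refl. f_equal.
        apply fsum_ext'. intros i Hi. destruct (Nat.eqb_spec i n). lia. auto. }
      rewrite List.Forall_forall. intros r Hr. rewrite Hred.
      apply in_app_or in Hr. destruct Hr as [Hr|[Hr|Hr]].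
      3: idtac. 2: { subst r. unfold t. field. auto. }
      all: assert (Hr' : In r (l1 ++ l2)) by (apply in_or_app; auto);
        rewrite List.Forall_forall in Hsol;
        specialize (Hsol (fun j => r j - r n / r0 n * r0 j) (in_map _ _ _ Hr'));
        simpl in Hsol; rewrite fsum_lin in Hsol;
        replace (r n * t) with (- (r n / r0 n * fsum n (fun j => r0 j * c' j))) by (unfold t; field; auto);
        lra.
Qed.

Lemma dint_const L1 L2 (g : R -> R -> R) K : (forall x y, g x y = K) ->
  dint L1 L2 g = L1 * (L2 * K).
Proof. intros H. unfold dint.
  rewrite (RInt_ext _ (fun _ => L2 * K)).
  rewrite (RInt_const (V:=R_CompleteNormedModule)). unfold scal; simpl; unfold mult; simpl. ring.
  intros x _. rewrite (RInt_ext _ (fun _ => K)).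
  rewrite (RInt_const (V:=R_CompleteNormedModule)). unfold scal; simpl; unfold mult; simpl. ring.
  intros; apply H. Qed.

Lemma RInt_const_ext (f : R -> R) a b K : (forall x, f x = K) -> RInt f a b = (b - a) * K.
Proof. intros H. rewrite (RInt_ext _ (fun _ => K)) by (intros; apply H).
  rewrite (RInt_const (V:=R_CompleteNormedModule)). unfold scal; simpl; unfold mult; simpl. ring. Qed.

Definition Fsq (j i : nat) (x y : R) : R := if Nat.eqb i j then 1 else 0.

Lemma fsum_delta k (c : nat -> R) i :
  fsum k (fun j => c j * (if Nat.eqb i j then 1 else 0)) = if Nat.ltb i k then c i else 0.
Proof. induction k; simpl. destruct i; reflexivity.
  rewrite IHk. destruct (Nat.eqb_spec i k).
  - subst. rewrite Nat.ltb_irrefl. assert (Nat.ltb k (S k) = true) by (apply Nat.ltb_lt; lia). rewrite H. ring.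
  - destruct (Nat.ltb_spec i k); destruct (Nat.ltb_spec i (S k)); try lia; ring. Qed.

Lemma combo_sq k c i x y : (i < k)%nat -> combo k Fsq c i x y = c i.
Proof. intros H. unfold combo, Fsq. rewrite fsum_delta. apply Nat.ltb_lt in H. rewrite H. auto. Qed.

Lemma C1_const (K : R) : C1_R2 (fun _ _ => K).
Proof. intros x y. split; [|split; [|split]].
  apply (ex_derive_const (K:=R_AbsRing) (V:=R_NormedModule)).
  apply (ex_derive_const (K:=R_AbsRing) (V:=R_NormedModule)).
  apply (continuous_ext (fun _ => 0)). intros p. unfold dx. rewrite Derive_const. auto.
  apply continuous_const.
  apply (continuous_ext (fun _ => 0)). intros p. unfold dy. rewrite Derive_const. auto.
  apply continuous_const. Qed.

Lemma fsum_nonneg m (f : nat -> R) : (forall i, (i < m)%nat -> 0 <= f i) -> 0 <= fsum m f.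
Proof. induction m; simpl; intros H. lra. assert (0 <= fsum m f) by (apply IHm; intros; apply H; lia).
  assert (0 <= f m) by (apply H; lia). lra. Qed.
Lemma fsum_pos m (f : nat -> R) j : (j < m)%nat -> 0 < f j -> (forall i, (i < m)%nat -> 0 <= f i) -> 0 < fsum m f.
Proof. induction m; simpl; intros Hj Hf H. lia.
  destruct (Nat.eq_dec j m). subst. assert (0 <= fsum m f) by (apply fsum_nonneg; intros; apply H; lia). lra.
  assert (0 < fsum m f) by (apply IHm; auto; try lia; intros; apply H; lia).
  assert (0 <= f m) by (apply H; lia). lra. Qed.

Lemma squares_energy alpha k Ls c i : (i < k)%nat ->
  robin_energy alpha Ls Ls (combo k Fsq c i) = alpha * (4 * Ls * c i ^ 2).
Proof.
  intros H. unfold robin_energy.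
  rewrite (dint_const _ _ _ 0).
  rewrite (RInt_const_ext _ 0 Ls (2 * c i ^ 2)) by (intros; rewrite !combo_sq by auto; ring).
  rewrite (RInt_const_ext _ 0 Ls (2 * c i ^ 2)) by (intros; rewrite !combo_sq by auto; ring).
  ring.
  intros x y. unfold dx, dy.
  unfold combo, Fsq. rewrite !Derive_const. ring.
Qed.

Lemma squares_norm k Ls c i : (i < k)%nat ->
  l2norm2 Ls Ls (combo k Fsq c i) = Ls * (Ls * c i ^ 2).
Proof. intros H. unfold l2norm2. apply dint_const. intros; rewrite combo_sq; auto. Qed.

Lemma upper_squares alpha k Ls : (1 <= k)%nat -> 0 < Ls ->
  Rbar_le (robin_eig alpha k Ls Ls k) (Finite (4 * alpha / Ls)).
Proof.
  intros Hk HL.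
  assert (HQ : forall c, Qform alpha k Ls Ls (combo k Fsq c) = 4 * alpha * Ls * fsum k (fun i => c i ^ 2)).
  { intros c. unfold Qform. rewrite fsum_scal. apply fsum_ext. intros i Hi.
    rewrite squares_energy by auto. ring. }
  assert (HN : forall c, Nform k Ls Ls (combo k Fsq c) = Ls * Ls * fsum k (fun i => c i ^ 2)).
  { intros c. unfold Nform. rewrite fsum_scal. apply fsum_ext. intros i Hi.
    rewrite squares_norm by auto. ring. }
  assert (Hpos : forall c, nonzero_coeffs k c -> 0 < fsum k (fun i => c i ^ 2)).
  { intros c [j [Hj Hc]]. apply (fsum_pos _ _ j); auto.
    apply pow2_gt_0; auto. intros; apply pow2_ge_0. }
  assert (Hadm : admissible k Ls Ls k Fsq).
  { split. intros j i _ _. unfold Fsq. apply C1_const.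
    intros c Hc. rewrite HN. specialize (Hpos c Hc). apply Rmult_lt_0_compat; auto. nra. }
  assert (Hmax : max_rayleigh alpha k Ls Ls k Fsq = Finite (4 * alpha / Ls)).
  { unfold max_rayleigh. apply is_lub_Rbar_unique. split.
    - intros r [c [Hc Hr]]. subst r. rewrite HQ, HN. specialize (Hpos c Hc).
      right. field. split; lra.
    - intros b Hb. apply Hb. exists (fun j => 1). split.
      exists 0%nat. split. lia. lra.
      rewrite HQ, HN. assert (Hp := Hpos (fun _ => 1) (ex_intro _ 0%nat (conj Hk (R1_neq_R0)))).
      field. split; lra. }
  unfold robin_eig. destruct (Glb_Rbar_correct (fun r => exists F, admissible k Ls Ls k F /\
                                max_rayleigh alpha k Ls Ls k F = Finite r)) as [Hlb _].
  apply Hlb. exists Fsq. split; auto.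
Qed.

Lemma C1f_of_C1 g : C1_R2 g -> C1f g (dx g) (dy g).
Proof.
  intros H. split; [|split; [|split]]; intros x y; destruct (H x y) as [H1 [H2 [H3 H4]]].
  - apply Derive_correct. exact H1.
  - apply Derive_correct. exact H2.
  - apply continuity_2d_pt_filterlim. exact H3.
  - apply continuity_2d_pt_filterlim. exact H4.
Qed.

Lemma C1f_combo k (c : nat -> R) (G Gx Gy : nat -> R -> R -> R) :
  (forall j, (j < k)%nat -> C1f (G j) (Gx j) (Gy j)) ->
  C1f (fun x y => fsum k (fun j => c j * G j x y))
      (fun x y => fsum k (fun j => c j * Gx j x y))
      (fun x y => fsum k (fun j => c j * Gy j x y)).
Proof.
  induction k; intros H.
  - simpl. split; [|split; [|split]]; intros x y.
    apply (is_derive_const (K:=R_AbsRing) (V:=R_NormedModule)).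
    apply (is_derive_const (K:=R_AbsRing) (V:=R_NormedModule)).
    apply continuity_2d_pt_const. apply continuity_2d_pt_const.
  - destruct (IHk (fun j Hj => H j (Nat.lt_lt_succ_r _ _ Hj))) as [A1 [A2 [A3 A4]]].
    destruct (H k (Nat.lt_succ_diag_r k)) as [B1 [B2 [B3 B4]]].
    simpl. split; [|split; [|split]]; intros x y.
    + apply (is_derive_plus (K:=R_AbsRing) (V:=R_NormedModule)). apply A1. apply is_derive_scal, B1.
    + apply (is_derive_plus (K:=R_AbsRing) (V:=R_NormedModule)). apply A2. apply is_derive_scal, B2.
    + apply continuity_2d_pt_plus. apply A3. apply continuity_2d_pt_mult. apply continuity_2d_pt_const. apply B3.
    + apply continuity_2d_pt_plus. apply A4. apply continuity_2d_pt_mult. apply continuity_2d_pt_const. apply B4.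
Qed.

Lemma cont2_of_C1f u ux uy : C1f u ux uy -> cont2 u.
Proof. intros [Hux [Huy [Cux Cuy]]] x y. apply (joint_cont u uy x y Huy Cuy).
  apply (ex_derive_continuous (K:=R_AbsRing) (V:=R_NormedModule)). eexists; apply Hux. Qed.

Lemma I2_plus_scal x0 x1 y0 y1 f g (k : R) : x0 <= x1 -> y0 <= y1 -> cont2 f -> cont2 g ->
  I2 x0 x1 y0 y1 (fun x y => f x y + k * g x y) = I2 x0 x1 y0 y1 f + k * I2 x0 x1 y0 y1 g.
Proof.
  intros Hx Hy Hf Hg. unfold I2.
  assert (Ef := inner_ex f x0 x1 y0 y1 Hx Hy Hf).
  assert (Eg := inner_ex g x0 x1 y0 y1 Hx Hy Hg).
  rewrite <- (RInt_scal_R _ k x0 x1 Eg).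
  rewrite <- (RInt_plus_R _ _ x0 x1 Ef (ex_RInt_scal_R _ k x0 x1 Eg)).
  apply RInt_ext. intros x _.
  assert (Ef' := slice_ex f x y0 y1 Hy Hf).
  assert (Eg' := slice_ex g x y0 y1 Hy Hg).
  rewrite <- (RInt_scal_R _ k y0 y1 Eg').
  apply (RInt_plus_R _ _ y0 y1 Ef' (ex_RInt_scal_R _ k y0 y1 Eg')).
Qed.

Lemma cont2_fsum k (c : nat -> R) (G : nat -> R -> R -> R) :
  (forall j, (j < k)%nat -> cont2 (G j)) -> cont2 (fun x y => fsum k (fun j => c j * G j x y)).
Proof. induction k; intros H x y; simpl. apply continuity_2d_pt_const.
  apply continuity_2d_pt_plus. apply IHk. intros; apply H; lia.
  apply continuity_2d_pt_mult. apply continuity_2d_pt_const. apply H; lia. Qed.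

Lemma I2_fsum x0 x1 y0 y1 k (c : nat -> R) (G : nat -> R -> R -> R) : x0 <= x1 -> y0 <= y1 ->
  (forall j, (j < k)%nat -> cont2 (G j)) ->
  I2 x0 x1 y0 y1 (fun x y => fsum k (fun j => c j * G j x y)) = fsum k (fun j => c j * I2 x0 x1 y0 y1 (G j)).
Proof.
  intros Hx Hy. induction k; intros H; simpl.
  - unfold I2. rewrite (RInt_ext _ (fun _ => 0)).
    rewrite (RInt_const (V:=R_CompleteNormedModule)). unfold scal; simpl; unfold mult; simpl. ring.
    intros x _. rewrite (RInt_const (V:=R_CompleteNormedModule)). unfold scal; simpl; unfold mult; simpl. ring.
  - rewrite (I2_plus_scal x0 x1 y0 y1 (fun x y => fsum k (fun j => c j * G j x y)) (G k) (c k)); auto.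
    rewrite IHk. auto. intros; apply H; lia.
    apply cont2_fsum. intros; apply H; lia.
Qed.

Lemma energy_ge alpha L1 L2 u ux uy : 0 < alpha -> 0 < L1 -> 0 < L2 -> C1f u ux uy ->
  I2 0 L1 0 L2 (fun x y => ux x y ^ 2 + uy x y ^ 2) <= robin_energy alpha L1 L2 u.
Proof.
  intros Ha H1 H2 HC. assert (Cu := cont2_of_C1f _ _ _ HC).
  destruct HC as [Hux [Huy [Cux Cuy]]].
  unfold robin_energy.
  assert (E : dint L1 L2 (fun x y => dx u x y ^ 2 + dy u x y ^ 2) = I2 0 L1 0 L2 (fun x y => ux x y ^ 2 + uy x y ^ 2)).
  { unfold dint, I2. apply RInt_ext. intros x _. apply RInt_ext. intros y _.
    unfold dx, dy. replace (Derive (fun t => u t y) x) with (ux x y) by (symmetry; apply is_derive_unique, Hux).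
    replace (Derive (fun t => u x t) y) with (uy x y) by (symmetry; apply is_derive_unique, Huy). reflexivity. }
  rewrite E.
  assert (0 <= RInt (fun x => u x 0 ^ 2 + u x L2 ^ 2) 0 L1).
  { apply RInt_ge0; [lra| |intros; apply Rplus_le_le_0_compat; apply pow2_ge_0].
    apply ex_RInt_cont; [lra|]. intros. apply cont_add; apply cont_sq; apply c2d_slice_x, Cu. }
  assert (0 <= RInt (fun y => u 0 y ^ 2 + u L1 y ^ 2) 0 L2).
  { apply RInt_ge0; [lra| |intros; apply Rplus_le_le_0_compat; apply pow2_ge_0].
    apply ex_RInt_cont; [lra|]. intros. apply cont_add; apply cont_sq; apply c2d_slice_y, Cu. }
  assert (0 <= alpha * (RInt (fun x => u x 0 ^ 2 + u x L2 ^ 2) 0 L1 + RInt (fun y => u 0 y ^ 2 + u L1 y ^ 2) 0 L2)) by nra.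
  lra.
Qed.

Definition rows (k m n : nat) (L1 L2 : R) (F : nat -> nat -> R -> R -> R) : list (nat -> R) :=
  flat_map (fun i => map (fun j => fun jj =>
     I2 (INR i * (L1 / INR m)) (INR (S i) * (L1 / INR m))
        (INR j * (L2 / INR n)) (INR (S j) * (L2 / INR n)) (F jj 0%nat)) (seq 0 n)) (seq 0 m).

Lemma flat_map_len {A B : Type} (g : A -> nat -> B) n (l : list A) :
  length (flat_map (fun i => map (g i) (seq 0 n)) l) = (length l * n)%nat.
Proof. induction l; simpl. auto. rewrite length_app, length_map, length_seq, IHl. lia. Qed.

Lemma rows_length k m n L1 L2 F : length (rows k m n L1 L2 F) = (m * n)%nat.
Proof. unfold rows. rewrite flat_map_len, length_seq. auto. Qed.

Lemma rows_in k m n L1 L2 F i j : (i < m)%nat -> (j < n)%nat ->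
  In (fun jj => I2 (INR i * (L1 / INR m)) (INR (S i) * (L1 / INR m))
        (INR j * (L2 / INR n)) (INR (S j) * (L2 / INR n)) (F jj 0%nat)) (rows k m n L1 L2 F).
Proof. intros Hi Hj. unfold rows. apply in_flat_map. exists i. split.
  apply in_seq. lia. apply in_map_iff. exists j. split; auto. apply in_seq. lia. Qed.

Lemma lower_rect alpha L1 L2 k m n B : 0 < alpha -> 0 < L1 -> 0 < L2 ->
  (0 < m)%nat -> (0 < n)%nat -> (m * n < k)%nat ->
  B <= Rmin ((PI / (L1 / INR m)) ^ 2) ((PI / (L2 / INR n)) ^ 2) ->
  Rbar_le (Finite B) (robin_eig alpha 1 L1 L2 k).
Proof.
  intros Ha H1 H2 Hm Hn Hmn HB.
  unfold robin_eig.
  destruct (Glb_Rbar_correct (fun r => exists F, admissible 1 L1 L2 k F /\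
                                max_rayleigh alpha 1 L1 L2 k F = Finite r)) as [_ Hg].
  apply Hg. intros r [F [[HC1 Hpos] Hmax]].
  assert (Hlen : (length (rows k m n L1 L2 F) < k)%nat) by (rewrite rows_length; auto).
  destruct (lin_solve k _ Hlen) as [c [Hnz Hsol]].
  assert (Hnz' : nonzero_coeffs k c) by exact Hnz.
  rewrite List.Forall_forall in Hsol.
  set (u := fun x y => fsum k (fun j => c j * F j 0%nat x y)).
  set (ux := fun x y => fsum k (fun j => c j * dx (F j 0%nat) x y)).
  set (uy := fun x y => fsum k (fun j => c j * dy (F j 0%nat) x y)).
  assert (HCj : forall j, (j < k)%nat -> C1f (F j 0%nat) (dx (F j 0%nat)) (dy (F j 0%nat))).
  { intros j Hj. apply C1f_of_C1. apply HC1; auto. }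
  assert (HCu : C1f u ux uy) by (apply C1f_combo; auto).
  assert (Hcont : forall j, (j < k)%nat -> cont2 (F j 0%nat)).
  { intros j Hj. apply (cont2_of_C1f _ _ _ (HCj j Hj)). }
  assert (Hm' : 0 < INR m) by (apply lt_0_INR; lia).
  assert (Hn' : 0 < INR n) by (apply lt_0_INR; lia).
  assert (Hgrid := grid_ineq u ux uy m n L1 L2 HCu Hm Hn H1 H2).
  assert (Hcell : forall i j, (i < m)%nat -> (j < n)%nat ->
     I2 (INR i * (L1 / INR m)) (INR (S i) * (L1 / INR m))
        (INR j * (L2 / INR n)) (INR (S j) * (L2 / INR n)) u = 0).
  { intros i j Hi Hj. unfold u. rewrite I2_fsum; auto.
    - specialize (Hsol _ (rows_in k m n L1 L2 F i j Hi Hj)). cbv beta in Hsol.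
      etransitivity; [|exact Hsol]. apply fsum_ext. intros ii Hii. rewrite Rmult_comm. reflexivity.
    - apply Rmult_le_compat_r. apply Rlt_le, Rdiv_lt_0_compat; auto. apply le_INR; lia.
    - apply Rmult_le_compat_r. apply Rlt_le, Rdiv_lt_0_compat; auto. apply le_INR; lia. }
  specialize (Hgrid Hcell).
  assert (HE := energy_ge alpha L1 L2 u ux uy Ha H1 H2 HCu).
  assert (HN : Nform 1 L1 L2 (combo k F c) = I2 0 L1 0 L2 (fun x y => u x y ^ 2)).
  { unfold Nform. simpl. rewrite Rplus_0_l. reflexivity. }
  assert (HQ : Qform alpha 1 L1 L2 (combo k F c) = robin_energy alpha L1 L2 u).
  { unfold Qform. simpl. rewrite Rplus_0_l. reflexivity. }
  assert (HNp := Hpos c Hnz').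
  assert (Hub : Rbar_le (Finite (Qform alpha 1 L1 L2 (combo k F c) / Nform 1 L1 L2 (combo k F c))) (Finite r)).
  { rewrite <- Hmax. unfold max_rayleigh.
    destruct (Lub_Rbar_correct (fun r => exists c, nonzero_coeffs k c /\
     r = Qform alpha 1 L1 L2 (combo k F c) / Nform 1 L1 L2 (combo k F c))) as [Hu _].
    apply Hu. exists c. split; auto. }
  simpl in Hub. simpl.
  rewrite HQ, HN in Hub. rewrite HN in HNp.
  set (N := I2 0 L1 0 L2 (fun x y => u x y ^ 2)) in *.
  set (K := Rmin ((PI / (L1 / INR m)) ^ 2) ((PI / (L2 / INR n)) ^ 2)) in *.
  assert (B * N <= K * N) by (apply Rmult_le_compat_r; lra).
  assert (B * N <= robin_energy alpha L1 L2 u) by lra.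
  assert (B <= robin_energy alpha L1 L2 u / N).
  { apply (Rmult_le_reg_r N); auto. replace (robin_energy alpha L1 L2 u / N * N) with (robin_energy alpha L1 L2 u) by (field; lra). lra. }
  lra.
Qed.

Lemma ceil_ex x : 0 < x -> exists m : nat, (0 < m)%nat /\ x <= INR m /\ INR m < x + 1.
Proof.
  intros Hx. destruct (archimed x) as [Hu1 Hu2].
  set (z := if Req_EM_T (IZR (up x) - x) 1 then (up x - 1)%Z else up x).
  assert (Hz : x <= IZR z < x + 1).
  { unfold z. destruct (Req_EM_T (IZR (up x) - x) 1).
    rewrite minus_IZR. lra. lra. }
  assert (Hz0 : (0 < z)%Z) by (apply lt_IZR; lra).
  exists (Z.to_nat z). rewrite INR_IZR_INZ, Z2Nat.id by lia. split; [lia|lra].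
Qed.

Theorem lemma7p3 (A alpha : R) (k : nat)
  (HA : 0 < A) (Halpha : 0 < alpha) (Hk : (3 <= k)%nat)
  (Hcond : 4 * sqrt A * sqrt (INR k) * alpha / PI ^ 2
           + 2 * sqrt (sqrt A) * sqrt (sqrt (INR k)) * sqrt alpha / PI
             * (sqrt (INR k) + / sqrt (INR k))
           + 1 <= INR k) :
  forall a : R, 1 <= a -> a <= sqrt (INR k) ->
    Rbar_le (eig_squares A alpha k k) (eig_rect A a alpha k).
Proof.
  intros a Ha1 Ha2.
  assert (Hk0 : 0 < INR k) by (apply lt_0_INR; lia).
  assert (HPI := PI_RGT_0).
  set (sA := sqrt A) in *. set (sk := sqrt (INR k)) in *.
  assert (HsA : 0 < sA) by (apply sqrt_lt_R0; auto).
  assert (Hsk : 0 < sk) by (apply sqrt_lt_R0; auto).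
  assert (EsA : sA * sA = A) by (apply sqrt_sqrt; lra).
  assert (Esk : sk * sk = INR k) by (apply sqrt_sqrt; lra).
  set (T := 2 * sqrt sA * sqrt sk * sqrt alpha / PI) in *.
  assert (HT : 0 < T).
  { unfold T. apply Rdiv_lt_0_compat; auto. repeat apply Rmult_lt_0_compat; try lra; apply sqrt_lt_R0; auto. }
  assert (ET : T ^ 2 = 4 * sA * sk * alpha / PI ^ 2).
  { unfold T. assert (E1 : sqrt sA * sqrt sA = sA) by (apply sqrt_sqrt; lra).
    assert (E2 : sqrt sk * sqrt sk = sk) by (apply sqrt_sqrt; lra).
    assert (E3 : sqrt alpha * sqrt alpha = alpha) by (apply sqrt_sqrt; lra).
    replace ((2 * sqrt sA * sqrt sk * sqrt alpha / PI) ^ 2) with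
      (4 * (sqrt sA * sqrt sA) * (sqrt sk * sqrt sk) * (sqrt alpha * sqrt alpha) / PI ^ 2) by (field; lra).
    rewrite E1, E2, E3. reflexivity. }
  set (Ls := sqrt (A / INR k)).
  assert (ELs : Ls = sA / sk) by (unfold Ls, sA, sk; apply sqrt_div_alt; auto).
  assert (HLs : 0 < Ls) by (rewrite ELs; apply Rdiv_lt_0_compat; auto).
  set (B := 4 * alpha / Ls).
  assert (HB : (PI * T / sA) ^ 2 = B).
  { unfold B. rewrite ELs. replace ((PI * T / sA) ^ 2) with (PI ^ 2 * T ^ 2 / (sA * sA)) by (field; lra).
    rewrite ET. field. repeat split; lra. }
  apply Rbar_le_trans with (Finite B).
  - unfold eig_squares. fold Ls. apply upper_squares; auto. lia.
  - unfold eig_rect.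
    set (L1 := sA * a). set (L2 := sA / a).
    assert (HL1 : 0 < L1) by (unfold L1; nra).
    assert (HL2 : 0 < L2) by (unfold L2; apply Rdiv_lt_0_compat; lra).
    destruct (ceil_ex (a * T)) as [m [Hm [Hm1 Hm2]]]; [nra|].
    destruct (ceil_ex (T / a)) as [n [Hn [Hn1 Hn2]]]; [apply Rdiv_lt_0_compat; lra|].
    apply (lower_rect alpha L1 L2 k m n B); auto.
    +
      assert (Hsum : a + / a <= sk + / sk).
      { apply (Rmult_le_reg_r (a * sk)); [nra|].
        replace ((a + / a) * (a * sk)) with (a * a * sk + sk) by (field; lra).
        replace ((sk + / sk) * (a * sk)) with (a * (sk * sk) + a) by (field; lra).
        assert (0 <= sk - a) by lra. assert (0 <= a * sk - 1) by nra. nra. }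
      assert (Hprod : INR m * INR n < (a * T + 1) * (T / a + 1)).
      { assert (0 < INR m) by (apply lt_0_INR; lia). assert (0 < INR n) by (apply lt_0_INR; lia).
        assert (0 < T / a) by (apply Rdiv_lt_0_compat; lra). nra. }
      replace ((a * T + 1) * (T / a + 1)) with (T ^ 2 + T * (a + / a) + 1) in Hprod by (field; lra).
      assert (T * (a + / a) <= T * (sk + / sk)) by (apply Rmult_le_compat_l; lra).
      rewrite ET in Hprod.
      assert (Hc : 4 * sA * sk * alpha / PI ^ 2 + T * (sk + / sk) + 1 <= INR k) by lra.
      apply INR_lt. rewrite mult_INR. lra.
    +
      assert (Hmp : 0 < INR m) by (apply lt_0_INR; lia).
      assert (Hnp : 0 < INR n) by (apply lt_0_INR; lia).
      assert (Q1 : PI * T / sA <= PI / (L1 / INR m)).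
      { replace (PI / (L1 / INR m)) with (PI * INR m / L1) by (field; lra).
        unfold L1. apply (Rmult_le_reg_r (sA * a)); [nra|].
        replace (PI * T / sA * (sA * a)) with (PI * (a * T)) by (field; lra).
        replace (PI * INR m / (sA * a) * (sA * a)) with (PI * INR m) by (field; lra).
        apply Rmult_le_compat_l; lra. }
      assert (Q2 : PI * T / sA <= PI / (L2 / INR n)).
      { replace (PI / (L2 / INR n)) with (PI * INR n / L2) by (field; lra).
        unfold L2. apply (Rmult_le_reg_r (sA / a)); [apply Rdiv_lt_0_compat; lra|].
        replace (PI * T / sA * (sA / a)) with (PI * (T / a)) by (field; lra).
        replace (PI * INR n / (sA / a) * (sA / a)) with (PI * INR n) by (field; lra).
        apply Rmult_le_compat_l; lra. }
      assert (P0 : 0 <= PI * T / sA) by (apply Rlt_le, Rdiv_lt_0_compat; nra).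
      rewrite <- HB. apply Rmin_glb; apply pow_incr; lra.
Qed.
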